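(* Let $\mathcal{T}=(V,\mathsf{p})$ and $\tilde{\mathcal{T}}=(V,\tilde{\mathsf{p}})$ be directed forests on the same vertex set such that $\mathcal{T}$ is thinner than $\tilde{\mathcal{T}}$. Then for every $k\in\mathbb{N}$, the $k$-th power $\mathcal{T}^k$ is thinner than $\tilde{\mathcal{T}}^k$.
   Context: A directed forest is a pair $\mathcal{T}=(V,\mathsf{p})$ where $V$ is a nonempty set and $\mathsf{p}\colon V\to V$ satisfies: if $n\in\mathbb{N}$, $v\in V$ and $\mathsf{p}^n(v)=v$, then $\mathsf{p}(v)=v$. Roots: $\mathrm{root}(\mathcal{T})=\{v:\mathsf{p}(v)=v\}$. $\mathcal{T}_1=(V,\mathsf{p}_1)$ is thinner than $\mathcal{T}_2=(V,\mathsf{p}_2)$ if $\mathsf{p}_1(v)\in\{v,\mathsf{p}_2(v)\}$ for all $v\in V$. For $k\in\mathbb{N}$ the $k$-th power of $\mathcal{T}=(V,\mathsf{p})$ is $\mathcal{T}^k=(V,\mathsf{p}^{[k]})$, where $\mathsf{p}^{[k]}(v)=\mathsf{p}^k(v)$ if $\mathsf{p}^{k-1}(v)\notin\mathrm{root}(\mathcal{T})$ and $\mathsf{p}^{[k]}(v)=v$ if $\mathsf{p}^{k-1}(v)\in\mathrm{root}(\mathcal{T})$ (here $\mathsf{p}^0=\mathrm{id}_V$); $\mathcal{T}^k$ is a directed forest. *)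

(* Defs.v *)
From Stdlib Require Import Arith ClassicalEpsilon.

Fixpoint iter {V : Type} (p : V -> V) (n : nat) (v : V) : V :=
  match n with
  | O => v
  | S n' => p (iter p n' v)
  end.

Definition directed_forest (V : Type) (p : V -> V) : Prop :=
  inhabited V /\
  forall (n : nat) (v : V), 1 <= n -> iter p n v = v -> p v = v.

Definition is_root {V : Type} (p : V -> V) (v : V) : Prop := p v = v.

Definition thinner {V : Type} (p1 p2 : V -> V) : Prop :=
  forall v : V, p1 v = v \/ p1 v = p2 v.

Definition power {V : Type} (p : V -> V) (k : nat) (v : V) : V :=
  if excluded_middle_informative (is_root p (iter p (k - 1) v))
  then v else iter p k v.

(* Main.v *)
Require Import Defs.
From Stdlib Require Import Arith Lia ClassicalEpsilon.

Lemma root_stable {V : Type} (p : V -> V) (v : V) (j : nat) :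
  is_root p (iter p j v) -> forall i, j <= i -> iter p i v = iter p j v.
Proof.
  intros H i Hi. induction i as [|i IH].
  - assert (j = 0) by lia. subst. reflexivity.
  - destruct (Nat.eq_dec j (S i)) as [E|E].
    + subst. reflexivity.
    + simpl. rewrite IH by lia. exact H.
Qed.

Theorem proposition4p2 (V : Type) (p pt : V -> V) :
  directed_forest V p -> directed_forest V pt -> thinner p pt ->
  forall k : nat, 1 <= k -> thinner (power p k) (power pt k).
Proof.
  intros _ _ Hth k Hk v.
  unfold power.
  destruct (excluded_middle_informative (is_root p (iter p (k - 1) v))) as [R|NR].
  - left. reflexivity.
  - assert (NRj : forall j, j <= k - 1 -> ~ is_root p (iter p j v)).
    { intros j Hj Rj. apply NR. unfold is_root.
      rewrite (root_stable p v j Rj (k-1) Hj). exact Rj. }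
    assert (Eq : forall j, j <= k -> iter p j v = iter pt j v).
    { induction j as [|j IH]; intros Hj.
      - reflexivity.
      - simpl. rewrite <- IH by lia.
        destruct (Hth (iter p j v)) as [E|E].
        + exfalso. apply (NRj j); [lia|exact E].
        + exact E. }
    destruct (excluded_middle_informative (is_root pt (iter pt (k - 1) v))) as [R2|NR2].
    + exfalso. apply NR. unfold is_root in *.
      rewrite <- (Eq (k-1)) in R2 by lia.
      destruct (Hth (iter p (k-1) v)) as [E|E].
      * exact E.
      * rewrite E. exact R2.
    + right. apply Eq. lia.
Qed.
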